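(* Let $p^*$ be the market equilibrium (with all $p^*_j>0$) of a complementary-CES Fisher market, let $R=\{p':\ \frac1{1.9}p^*_j\le p'_j\le1.9p^*_j\ \forall j\}$, $\theta_i=\rho_i/(\rho_i-1)$ and $\bar\theta=\max_i\theta_i$. Then for every $p'\in R$, $$\sum_jp^*_j(f_j)^2\le\bar M\sum_jp'_j\big(z_j(p')\big)^2,\qquad f_j=\ln(p'_j/p^*_j),$$ where $\bar M=(1-\bar\theta)^{-1}\max\big\{26.56,\ 6.64\,\bar\theta\,(1+\bar\theta-2^{\bar\theta})^{-1}\big\}$ (for $\bar\theta=0$ the second entry of the max is read as its limit).
   Context: A Fisher market has $n$ goods, each with supply $1$, and buyers $i$ with budgets $e_i>0$ and complementary-CES utilities $u_i(x)=(\sum_ja_{ij}x_{ij}^{\rho_i})^{1/\rho_i}$ with $\rho_i\le0$, $a_{ij}\ge0$ (so $\theta_i\in[0,1)$). At prices $p$, buyer $i$ demands a utility-maximizing bundle of cost at most $e_i$; $x_j(p)$ is the total demand for good $j$ and $z_j(p)=x_j(p)-1$ its excess demand. A market equilibrium is a price vector $p^*$ with $z_j(p^* )=0$ whenever $p^*_j>0$ and $z_j(p^* )\le0$ whenever $p^*_j=0$. *)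

(* Defs.v *)
From Stdlib Require Import Reals.
Open Scope R_scope.

(* Goods are indexed 0..n-1, buyers 0..m-1. *)

Fixpoint sumR (n : nat) (f : nat -> R) : R :=
  match n with O => 0 | S k => sumR k f + f k end.

Fixpoint prodR (n : nat) (f : nat -> R) : R :=
  match n with O => 1 | S k => prodR k f * f k end.

Fixpoint hasZero (n : nat) (a x : nat -> R) : bool :=
  match n with
  | O => false
  | S k => hasZero k a x ||
           (if Rlt_dec 0 (a k) then (if Rle_dec (x k) 0 then true else false)
            else false)
  end.

(* Complementary-CES utility (sum_j a_j x_j^rho)^(1/rho), rho <= 0, evaluated on a
   bundle x >= 0.  Terms with a_j = 0 are omitted (convention 0 * 0^rho = 0);
   if some good with a_j > 0 is absent the utility is 0 (its limiting value).
   For rho = 0 we use the Cobb-Douglas limit prod_j x_j^(a_j / sum_k a_k). *)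
Definition ces_utility (n : nat) (a : nat -> R) (rho : R) (x : nat -> R) : R :=
  if hasZero n a x then 0
  else if Req_EM_T rho 0 then
    prodR n (fun j => if Rlt_dec 0 (a j) then Rpower (x j) (a j / sumR n a) else 1)
  else
    Rpower (sumR n (fun j => if Rlt_dec 0 (a j) then a j * Rpower (x j) rho else 0))
           (/ rho).

Definition optimal_bundle (n : nat) (a : nat -> R) (rho e : R) (p x : nat -> R)
  : Prop :=
  (forall j, (j < n)%nat -> 0 <= x j) /\
  sumR n (fun j => p j * x j) <= e /\
  (forall y : nat -> R,
      (forall j, (j < n)%nat -> 0 <= y j) ->
      sumR n (fun j => p j * y j) <= e ->
      ces_utility n a rho y <= ces_utility n a rho x).

Definition is_demand (n m : nat) (a : nat -> nat -> R) (rho e : nat -> R)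
  (p : nat -> R) (x : nat -> nat -> R) : Prop :=
  forall i, (i < m)%nat -> optimal_bundle n (a i) (rho i) (e i) p (x i).

(* excess demand z_j = sum_i x_ij - 1 (supply 1) *)
Definition excess (m : nat) (x : nat -> nat -> R) (j : nat) : R :=
  sumR m (fun i => x i j) - 1.

Definition market_equilibrium (n m : nat) (a : nat -> nat -> R) (rho e : nat -> R)
  (p : nat -> R) : Prop :=
  exists x, is_demand n m a rho e p x /\
    (forall j, (j < n)%nat -> 0 < p j -> excess m x j = 0) /\
    (forall j, (j < n)%nat -> p j = 0 -> excess m x j <= 0).

Definition theta (rho : R) : R := rho / (rho - 1).

Definition Mbar (th : R) : R :=
  / (1 - th) *
  Rmax (2656 / 100)
       (if Req_EM_T th 0 then (664 / 100) / (1 - ln 2)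
        else (664 / 100) * th / (1 + th - Rpower 2 th)).

(* Main.v *)
Require Import Defs.
From Stdlib Require Import Reals Lra Lia Psatz.
From Coquelicot Require Coquelicot.
Open Scope R_scope.

Module AuxA.
Import Coquelicot.Coquelicot.

Lemma deriv_mono (f f' : R -> R) a b : a <= b ->
  (forall c, a <= c <= b -> derivable_pt_lim f c (f' c)) ->
  (forall c, a <= c <= b -> 0 <= f' c) -> f a <= f b.
Proof.
  intros Hab Hd Hp. destruct (Req_dec a b) as [->|Hne]; [lra|].
  destruct (MVT_cor2 f f' a b) as [c [Hc1 Hc2]]; [lra|exact Hd|].
  assert (0 <= f' c) by (apply Hp; lra). nra.
Qed.

Lemma H_aux_deriv r : 0 < r ->
  derivable_pt_lim (fun r => r - / r - 2 * ln r) r ((1 - / r)^2).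
Proof.
  intros Hr. apply is_derive_Reals.
  auto_derive. lra. field. lra.
Qed.

Lemma H_aux r : 0 < r -> (1 <= r -> 0 <= r - / r - 2 * ln r) /\ (r <= 1 -> r - / r - 2 * ln r <= 0).
Proof.
  intros Hr. split; intros H.
  - pose proof (deriv_mono (fun r => r - / r - 2 * ln r) (fun r => (1 - /r)^2) 1 r H) as K.
    simpl in K. rewrite ln_1, Rinv_1 in K.
    assert (0 <= r - / r - 2 * ln r) ; [|lra].
    replace 0 with (1 - 1 - 2*0) by ring. apply K.
    + intros c Hc. apply H_aux_deriv. lra.
    + intros c _. apply pow2_ge_0.
  - pose proof (deriv_mono (fun r => r - / r - 2 * ln r) (fun r => (1 - /r)^2) r 1 H) as K.
    simpl in K. rewrite ln_1, Rinv_1 in K.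
    assert (r - / r - 2 * ln r <= 0) ; [|lra].
    replace 0 with (1 - 1 - 2*0) by ring. apply K.
    + intros c Hc. apply H_aux_deriv. lra.
    + intros c _. apply pow2_ge_0.
Qed.

Lemma G_deriv r : 0 < r ->
  derivable_pt_lim (fun r => r + / r - 2 - (ln r)^2) r ((r - / r - 2 * ln r) / r).
Proof.
  intros Hr. apply is_derive_Reals.
  auto_derive. lra. field. lra.
Qed.

Lemma ln_sq_le r : 0 < r -> (ln r)^2 <= r + / r - 2.
Proof.
  intros Hr. destruct (Rle_dec 1 r) as [H|H].
  - pose proof (deriv_mono (fun r => r + / r - 2 - (ln r)^2) (fun r => (r - / r - 2 * ln r) / r) 1 r H) as K.
    simpl in K. rewrite ln_1, Rinv_1 in K.
    assert (1 + 1 - 2 - 0*(0*1) <= r + / r - 2 - ln r * (ln r * 1)); [|lra].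
    apply K.
    + intros c Hc. apply G_deriv. lra.
    + intros c Hc. destruct (H_aux c ltac:(lra)) as [H1 _].
      apply Rdiv_le_0_compat; [apply H1|]; lra.
  - assert (Hr1 : r <= 1) by lra.
    pose proof (deriv_mono (fun r => -(r + / r - 2 - (ln r)^2)) (fun r => -((r - / r - 2 * ln r) / r)) r 1 Hr1) as K.
    simpl in K. rewrite ln_1, Rinv_1 in K.
    assert (-(r + / r - 2 - ln r * (ln r * 1)) <= -(1 + 1 - 2 - 0*(0*1))); [|lra].
    apply K.
    + intros c Hc. apply derivable_pt_lim_opp. apply G_deriv. lra.
    + intros c Hc. destruct (H_aux c ltac:(lra)) as [_ H2].
      assert (0 <= - (c - / c - 2 * ln c) / c). apply Rdiv_le_0_compat; [|lra]. specialize (H2 ltac:(lra)). lra.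
      unfold Rdiv in *. lra.
Qed.

Lemma phi_deriv r : 0 < r ->
  derivable_pt_lim (fun r => r - 1 - ln r - (r + / r - 2) / 3) r ((r - 1) * (2 * r - 1) / (3 * r ^ 2)).
Proof.
  intros Hr. apply is_derive_Reals.
  auto_derive. lra. field. lra.
Qed.

Lemma rln_bound r : / 2 <= r -> (r + / r - 2) / 3 <= r - 1 - ln r.
Proof.
  intros Hr. destruct (Rle_dec 1 r) as [H|H].
  - pose proof (deriv_mono (fun r => r - 1 - ln r - (r + / r - 2) / 3) (fun r => (r - 1) * (2 * r - 1) / (3 * r ^ 2)) 1 r H) as K.
    simpl in K. rewrite ln_1, Rinv_1 in K.
    assert (1 - 1 - 0 - (1 + 1 - 2) / 3 <= r - 1 - ln r - (r + / r - 2) / 3); [|lra].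
    apply K.
    + intros c Hc. apply phi_deriv. lra.
    + intros c Hc. apply Rdiv_le_0_compat; [nra|]. nra.
  - assert (Hr1 : r <= 1) by lra.
    pose proof (deriv_mono (fun r => -(r - 1 - ln r - (r + / r - 2) / 3)) (fun r => -((r - 1) * (2 * r - 1) / (3 * r ^ 2))) r 1 Hr1) as K.
    simpl in K. rewrite ln_1, Rinv_1 in K.
    assert (-(r - 1 - ln r - (r + / r - 2) / 3) <= -(1 - 1 - 0 - (1 + 1 - 2) / 3)); [|lra].
    apply K.
    + intros c Hc. apply derivable_pt_lim_opp. apply phi_deriv. lra.
    + intros c Hc. assert (0 <= (1 - c) * (2 * c - 1) / (3 * c ^ 2)).
      apply Rdiv_le_0_compat; [nra|nra].
      replace (- ((c - 1) * (2 * c - 1) / (3 * (c * (c * 1))))) with ((1 - c) * (2 * c - 1) / (3 * c ^ 2)) by (field; lra). lra.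
Qed.

End AuxA.
Import AuxA.

Lemma exp_n (n : nat) x : exp (INR n * x) = exp x ^ n.
Proof.
  induction n as [|n IH]. simpl. rewrite Rmult_0_l, exp_0. ring.
  rewrite S_INR, Rmult_plus_distr_r, Rmult_1_l, exp_plus, IH. simpl. ring.
Qed.

Lemma ln2_lt : ln 2 < 7/10.
Proof.
  assert (H : 2 < exp (7/10)).
  { replace (7/10) with (INR 64 * (7/640)) by (simpl; lra).
    rewrite exp_n.
    assert (H1 : 1 + 7/640 < exp (7/640)) by (apply exp_ineq1; lra).
    assert (H2 : (1 + 7/640)^64 <= exp (7/640) ^ 64).
    { apply pow_incr. lra. }
    assert (2 <= (647/640)^64) by lra. lra. }
  rewrite <- (ln_exp (7/10)). apply ln_increasing; lra.
Qed.


Lemma Rdiv_nonneg a b : 0 <= a -> 0 < b -> 0 <= a / b.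
Proof. intros. unfold Rdiv. apply Rmult_le_pos; [lra|]. left; apply Rinv_0_lt_compat; lra. Qed.

Lemma sumR_ext n f g : (forall j, (j < n)%nat -> f j = g j) -> sumR n f = sumR n g.
Proof. induction n; simpl; intros H; [reflexivity|]. rewrite IHn, H; [reflexivity|lia|intros; apply H; lia]. Qed.

Lemma sumR_le n f g : (forall j, (j < n)%nat -> f j <= g j) -> sumR n f <= sumR n g.
Proof. induction n; simpl; intros H; [lra|]. assert (f n <= g n) by (apply H; lia).
  assert (sumR n f <= sumR n g) by (apply IHn; intros; apply H; lia). lra. Qed.

Lemma sumR_plus n f g : sumR n (fun j => f j + g j) = sumR n f + sumR n g.
Proof. induction n; simpl; [ring|]. rewrite IHn. ring. Qed.

Lemma sumR_scal n c f : sumR n (fun j => c * f j) = c * sumR n f.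
Proof. induction n; simpl; [ring|]. rewrite IHn. ring. Qed.

Lemma sumR_minus n f g : sumR n (fun j => f j - g j) = sumR n f - sumR n g.
Proof. induction n; simpl; [ring|]. rewrite IHn. ring. Qed.

Lemma sumR_zero n : sumR n (fun _ => 0) = 0.
Proof. induction n; simpl; [ring|]. rewrite IHn. ring. Qed.

Lemma sumR_nonneg n f : (forall j, (j < n)%nat -> 0 <= f j) -> 0 <= sumR n f.
Proof. intros H. rewrite <- (sumR_zero n). apply sumR_le. exact H. Qed.

Lemma sumR_swap n m (F : nat -> nat -> R) :
  sumR n (fun j => sumR m (fun i => F i j)) = sumR m (fun i => sumR n (fun j => F i j)).
Proof.
  induction n; simpl. { rewrite sumR_zero. reflexivity. }
  rewrite IHn, <- sumR_plus. reflexivity.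
Qed.

Lemma sumR_CS n (a b w : nat -> R) : (forall j, (j < n)%nat -> 0 < w j) ->
  (sumR n (fun j => a j * b j))^2 <=
  sumR n (fun j => w j * a j ^ 2) * sumR n (fun j => b j ^ 2 / w j).
Proof.
  induction n; intros Hw; cbn [sumR]; [simpl; lra|].
  assert (IH := IHn (fun j Hj => Hw j ltac:(lia))).
  set (A := sumR n (fun j => a j * b j)) in *.
  set (X := sumR n (fun j => w j * a j ^ 2)) in *.
  set (Y := sumR n (fun j => b j ^ 2 / w j)) in *.
  assert (HX : 0 <= X) by (apply sumR_nonneg; intros; assert (0 < w j) by (apply Hw; lia); nra).
  assert (HY : 0 <= Y) by (apply sumR_nonneg; intros; assert (0 < w j) by (apply Hw; lia);
     apply Rdiv_nonneg; [nra|lra]).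
  assert (hw : 0 < w n) by (apply Hw; lia).
  set (x := a n) in *. set (y := b n) in *. set (v := w n) in *.
  set (y' := y / v).
  replace (y ^ 2 / v) with (v * y' ^ 2) by (unfold y'; field; lra).
  replace (x * y) with (v * x * y') by (unfold y'; field; lra).
  assert (K : 2 * A * (v * x * y') <= X * (v * y'^2) + v * x ^ 2 * Y).
  { assert (K1 : 0 <= X * (v * y'^2) + v * x ^ 2 * Y) by (apply Rplus_le_le_0_compat; apply Rmult_le_pos; nra).
    assert (K2 : (2 * A * (v * x * y'))^2 <= (X * (v * y'^2) + v * x ^ 2 * Y)^2).
    { assert ((2 * A * (v * x * y'))^2 = 4 * A^2 * (v^2 * x^2 * y'^2)) by ring.
      assert (4 * A^2 * (v^2 * x^2 * y'^2) <= 4 * (X*Y) * (v^2 * x^2 * y'^2)).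
      { apply Rmult_le_compat_r; [nra|]. lra. }
      assert ((X * (v * y'^2) + v * x ^ 2 * Y)^2 - 4 * (X*Y) * (v^2 * x^2 * y'^2) = (X * (v * y'^2) - v * x ^ 2 * Y)^2) by ring.
      pose proof (pow2_ge_0 (X * (v * y'^2) - v * x ^ 2 * Y)). lra. }
    destruct (Rle_dec 0 (2 * A * (v * x * y'))); [|lra].
    apply Rsqr_incr_0_var; unfold Rsqr; [nra|lra]. }
  nra.
Qed.


Lemma ln_le_xm1 x : 0 < x -> ln x <= x - 1.
Proof. intros. pose proof (exp_ineq1_le (ln x)). rewrite exp_ln in H0 by lra. lra. Qed.

Lemma Rpower_conc r th : 0 < r -> 0 <= th <= 1 -> Rpower r th <= 1 + th * (r - 1).
Proof.
  intros Hr Hth. unfold Rpower.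
  assert (E1 : exp (ln r) = exp (th * ln r) * exp ((1 - th) * ln r)) by (rewrite <- exp_plus; f_equal; ring).
  assert (E2 : 1 = exp (th * ln r) * exp (- (th * ln r))) by (rewrite <- exp_plus; replace (th * ln r + - (th * ln r)) with 0 by ring; rewrite exp_0; reflexivity).
  rewrite exp_ln in E1 by lra.
  pose proof (exp_ineq1_le ((1 - th) * ln r)). pose proof (exp_ineq1_le (- (th * ln r))).
  pose proof (exp_pos (th * ln r)) as Hp.
  set (a := exp (th * ln r)) in *.
  assert (r >= a * (1 + (1 - th) * ln r)) by (rewrite E1 at 1; apply Rle_ge, Rmult_le_compat_l; lra).
  assert (1 >= a * (1 + - (th * ln r))) by (rewrite E2 at 1; apply Rle_ge, Rmult_le_compat_l; lra).
  nra.
Qed.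

Lemma Rpower_pos r th : 0 < Rpower r th.
Proof. unfold Rpower. apply exp_pos. Qed.

Lemma Rpower_div_ge r th : 0 < r -> 1 - (1 - th) * ln r <= Rpower r th / r.
Proof.
  intros Hr. replace (Rpower r th / r) with (exp ((th - 1) * ln r)).
  - pose proof (exp_ineq1_le ((th - 1) * ln r)). lra.
  - unfold Rpower. replace ((th - 1) * ln r) with (th * ln r + - ln r) by ring.
    rewrite exp_plus, exp_Ropp, exp_ln by lra. field. lra.
Qed.

Lemma sumR_lb n (U f : nat -> R) c : (forall j, (j < n)%nat -> 0 <= U j) -> sumR n U = 1 ->
  (forall j, (j < n)%nat -> c <= f j) -> c <= sumR n (fun j => U j * f j).
Proof.
  intros HU HS Hf. replace c with (sumR n (fun j => c * U j)) by (rewrite sumR_scal, HS; ring).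
  apply sumR_le. intros j Hj. specialize (HU j Hj). specialize (Hf j Hj). nra.
Qed.

Lemma sumR_ub n (U f : nat -> R) c : (forall j, (j < n)%nat -> 0 <= U j) -> sumR n U = 1 ->
  (forall j, (j < n)%nat -> f j <= c) -> sumR n (fun j => U j * f j) <= c.
Proof.
  intros HU HS Hf. replace c with (sumR n (fun j => c * U j)) by (rewrite sumR_scal, HS; ring).
  apply sumR_le. intros j Hj. specialize (HU j Hj). specialize (Hf j Hj). nra.
Qed.

Definition gam : R := 13/40.

Lemma buyer_ineq n (U r : nat -> R) th :
  0 <= th < 1 -> (forall j, (j < n)%nat -> 0 <= U j) -> sumR n U = 1 ->
  (forall j, (j < n)%nat -> / 2 <= r j <= 2) ->
  gam * (1 - th) * sumR n (fun j => U j * ((r j - 1) ^ 2 / r j)) <=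
  sumR n (fun j => U j * r j) - 2 +
  sumR n (fun j => U j * Rpower (r j) th / r j) / sumR n (fun j => U j * Rpower (r j) th).
Proof.
  intros Hth HU HS Hr.
  set (M1 := sumR n (fun j => U j * r j)).
  set (N := sumR n (fun j => U j * Rpower (r j) th / r j)).
  set (P := sumR n (fun j => U j * Rpower (r j) th)).
  set (W := sumR n (fun j => U j * ((r j - 1) ^ 2 / r j))).
  set (mu := sumR n (fun j => U j * ln (r j))).
  set (s := 1 - th).
  assert (HN : 1 - s * mu <= N).
  { unfold N, mu. rewrite <- HS, <- sumR_scal, <- sumR_minus. apply sumR_le. intros j Hj.
    specialize (HU j Hj). specialize (Hr j Hj).
    pose proof (Rpower_div_ge (r j) th ltac:(lra)).
    replace (U j * Rpower (r j) th / r j) with (U j * (Rpower (r j) th / r j)) by (field; lra).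
    unfold s. nra. }
  assert (HP : P <= 1 + th * (M1 - 1)).
  { unfold P, M1. rewrite <- HS.
    replace (sumR n U + th * (sumR n (fun j => U j * r j) - sumR n U)) with
      (sumR n (fun j => U j * (1 + th * (r j - 1)))).
    2:{ rewrite <- sumR_minus, <- sumR_scal, <- sumR_plus. apply sumR_ext. intros. ring. }
    apply sumR_le. intros j Hj. specialize (HU j Hj). specialize (Hr j Hj).
    pose proof (Rpower_conc (r j) th ltac:(lra) ltac:(lra)). nra. }
  assert (HP0 : 1 - th <= P).
  { unfold P. apply sumR_lb; auto. intros j Hj. specialize (Hr j Hj).
    assert (1 - th <= Rpower (r j) th).
    { unfold Rpower. pose proof (exp_ineq1_le (th * ln (r j))).
      assert (1 - / r j <= ln (r j)).
      { assert (0 < / r j) by (apply Rinv_0_lt_compat; lra).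
        pose proof (ln_le_xm1 (/ r j) H0).
        rewrite ln_Rinv in * by lra; lra. }
      assert (- 1 <= 1 - / r j).
      { assert (/ r j <= 2). { replace 2 with (/ / 2) by field. apply Rinv_le_contravar; lra. } lra. }
      nra. }
    lra. }
  assert (HM1 : / 2 <= M1).
  { unfold M1. apply sumR_lb; auto. intros j Hj. specialize (Hr j Hj). lra. }
  assert (HW0 : 0 <= W).
  { apply sumR_nonneg. intros j Hj. specialize (HU j Hj). specialize (Hr j Hj).
    apply Rmult_le_pos; [lra|]. apply Rdiv_nonneg; [apply pow2_ge_0|lra]. }
  assert (HW1 : W <= / 2).
  { unfold W. apply sumR_ub; auto. intros j Hj. specialize (Hr j Hj).
    assert ((r j - 1) ^ 2 / r j <= / 2).
    { apply Rmult_le_reg_r with (r j); [lra|]. unfold Rdiv. rewrite Rmult_assoc, Rinv_l by lra. nra. }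
    lra. }
  assert (HL : W / 3 <= M1 - 1 - mu).
  { unfold W, M1, mu. rewrite <- HS.
    replace (sumR n (fun j => U j * r j) - sumR n U - sumR n (fun j => U j * ln (r j))) with
      (sumR n (fun j => U j * (r j - 1 - ln (r j)))).
    2:{ rewrite <- !sumR_minus. apply sumR_ext. intros. ring. }
    unfold Rdiv at 1. rewrite Rmult_comm, <- sumR_scal. apply sumR_le. intros j Hj.
    specialize (HU j Hj). specialize (Hr j Hj).
    pose proof (rln_bound (r j) ltac:(lra)).
    replace ((r j + / r j - 2) / 3) with (/ 3 * ((r j - 1) ^ 2 / r j)) in H by (field; lra).
    nra. }
  remember (1 + th * (M1 - 1)) as Den eqn:HDen.
  assert (HD : 0 < Den) by (rewrite HDen; nra).
  assert (HPpos : 0 < P) by lra.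
  assert (HNP : (1 - s * mu) / Den <= N / P).
  { destruct (Rle_dec 0 (1 - s * mu)).
    - apply Rle_trans with ((1 - s * mu) / P).
      + unfold Rdiv. apply Rmult_le_compat_l; [lra|]. apply Rinv_le_contravar; lra.
      + unfold Rdiv. apply Rmult_le_compat_r; [left; apply Rinv_0_lt_compat; lra|lra].
    - apply Rle_trans with 0.
      + unfold Rdiv. assert (0 < / Den) by (apply Rinv_0_lt_compat; lra). nra.
      + apply Rdiv_nonneg; [|lra]. apply sumR_nonneg. intros j Hj.
        specialize (HU j Hj). specialize (Hr j Hj). pose proof (Rpower_pos (r j) th).
        apply Rdiv_nonneg; [nra|lra]. }
  assert (KEY : gam * s * W * Den <= (M1 - 2) * Den + (1 - s * mu)).
  { rewrite HDen. unfold s, gam.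
    replace ((M1 - 2) * (1 + th * (M1 - 1)) + (1 - (1 - th) * mu)) with
      (th * (M1 - 1)^2 + (1 - th) * (M1 - 1 - mu)) by ring.
    set (y := M1 - 1) in *.
    assert (Q1 : 0 <= th * (y - 13/80 * (1 - th) * W)^2) by (apply Rmult_le_pos; [lra|apply pow2_ge_0]).
    assert (Q2 : 0 <= (1-th) * W * (1/3 - 13/40 - (13/40)^2/4 * th * (1 - th) * W)).
    { apply Rmult_le_pos; [nra|].
      assert (th * (1 - th) <= 1/4) by (pose proof (pow2_ge_0 (th - 1/2)); lra).
      assert (0 <= th * (1 - th)) by (apply Rmult_le_pos; lra).
      assert (th * (1 - th) * W <= 1/4 * W) by (apply Rmult_le_compat_r; lra).
      assert (th * (1 - th) * W <= 1/8) by lra. lra. }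
    assert (Q3 : (1 - th) * (W / 3) <= (1 - th) * (y - mu)) by (apply Rmult_le_compat_l; lra).
    lra. }
  assert (HX : gam * s * W <= M1 - 2 + (1 - s * mu) / Den).
  { apply Rmult_le_reg_r with Den; [lra|].
    replace ((M1 - 2 + (1 - s * mu) / Den) * Den) with ((M1 - 2) * Den + (1 - s * mu)) by (field; lra).
    lra. }
  unfold s in *. lra.
Qed.


Lemma Rpower_conc_strict r th : 0 < r -> r <> 1 -> 0 < th < 1 -> Rpower r th < 1 + th * (r - 1).
Proof.
  intros Hr Hr1 Hth. unfold Rpower.
  assert (Hl : ln r <> 0). { intro H. apply Hr1. rewrite <- (exp_ln r) by lra. rewrite H, exp_0. reflexivity. }
  assert (E1 : exp (ln r) = exp (th * ln r) * exp ((1 - th) * ln r)) by (rewrite <- exp_plus; f_equal; ring).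
  assert (E2 : 1 = exp (th * ln r) * exp (- (th * ln r))) by (rewrite <- exp_plus; replace (th * ln r + - (th * ln r)) with 0 by ring; rewrite exp_0; reflexivity).
  rewrite exp_ln in E1 by lra.
  assert (N1 : (1 - th) * ln r <> 0) by (apply Rmult_integral_contrapositive; split; lra).
  assert (N2 : - (th * ln r) <> 0) by (apply Ropp_neq_0_compat, Rmult_integral_contrapositive; split; lra).
  pose proof (exp_ineq1 _ N1). pose proof (exp_ineq1 _ N2).
  pose proof (exp_pos (th * ln r)) as Hp.
  set (a := exp (th * ln r)) in *.
  assert (r > a * (1 + (1 - th) * ln r)) by (rewrite E1 at 1; apply Rmult_lt_compat_l; lra).
  assert (1 > a * (1 + - (th * ln r))) by (rewrite E2 at 1; apply Rmult_lt_compat_l; lra).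
  nra.
Qed.

Lemma Mbar_bound th : 0 <= th < 1 -> 1 <= Mbar th * (gam ^ 2 * (1 - th) ^ 2).
Proof.
  intros Hth. unfold Mbar, gam.
  assert (Hs : 0 < 1 - th) by lra.
  set (X := if Req_EM_T th 0 then 664 / 100 / (1 - ln 2) else 664 / 100 * th / (1 + th - Rpower 2 th)).
  assert (Hred : / (1 - th) * Rmax (2656 / 100) X * ((13 / 40) ^ 2 * (1 - th) ^ 2) =
                 (13/40)^2 * ((1 - th) * Rmax (2656 / 100) X)) by (field; lra).
  rewrite Hred.
  assert (947/100 <= (1 - th) * Rmax (2656 / 100) X); [|lra].
  destruct (Rle_dec th (3/5)).
  - pose proof (Rmax_l (2656/100) X).
    assert ((1 - th) * (2656/100) <= (1 - th) * Rmax (2656 / 100) X) by (apply Rmult_le_compat_l; lra). lra.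
  - pose proof (Rmax_r (2656/100) X).
    assert (HX : X = 664 / 100 * th / (1 + th - Rpower 2 th)).
    { unfold X. destruct (Req_EM_T th 0); [lra|reflexivity]. }
    assert (Hk : 0 < 1 + th - Rpower 2 th).
    { pose proof (Rpower_conc_strict 2 th ltac:(lra) ltac:(lra) ltac:(lra)). lra. }
    assert (Hk2 : 1 + th - Rpower 2 th <= (1 - th) * (2 * ln 2 - 1)).
    { unfold Rpower. replace (th * ln 2) with (ln 2 + - ((1 - th) * ln 2)) by ring.
      rewrite exp_plus, exp_ln by lra.
      pose proof (exp_ineq1_le (- ((1 - th) * ln 2))). lra. }
    pose proof ln2_lt.
    set (k := 1 + th - Rpower 2 th) in *.
    assert (Hq : 5/2 <= (1 - th) / k).
    pose proof ln2_lt. assert ((1 - th) * (2 * ln 2 - 1) <= (1 - th) * (4/10)) by (apply Rmult_le_compat_l; lra).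
    { apply Rmult_le_reg_r with k; [lra|]. replace ((1 - th) / k * k) with (1 - th) by (field; lra). lra. }
    assert (X * (1 - th) = 664/100 * th * ((1 - th) / k)) by (rewrite HX; field; lra).
    assert (664/100 * th * (5/2) <= 664/100 * th * ((1 - th) / k)) by (apply Rmult_le_compat_l; lra).
    assert ((1 - th) * X <= (1 - th) * Rmax (2656 / 100) X) by (apply Rmult_le_compat_l; lra). lra.
Qed.


Lemma hasZero_false n a y : (forall j, (j < n)%nat -> 0 < a j -> 0 < y j) -> hasZero n a y = false.
Proof.
  induction n; simpl; intros H; [reflexivity|]. rewrite IHn by (intros; apply H; [lia|assumption]).
  destruct (Rlt_dec 0 (a n)) as [Ha|Ha]; simpl; [|reflexivity].
  destruct (Rle_dec (y n) 0) as [Hy|Hy]; [|reflexivity]. specialize (H n ltac:(lia) Ha). lra.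
Qed.

Lemma hasZero_false_inv n a y : hasZero n a y = false -> forall j, (j < n)%nat -> 0 < a j -> 0 < y j.
Proof.
  induction n; simpl; intros H j Hj Ha; [lia|].
  apply Bool.orb_false_iff in H. destruct H as [H1 H2].
  destruct (Nat.eq_dec j n) as [->|Hne].
  - destruct (Rlt_dec 0 (a n)); [|lra]. destruct (Rle_dec (y n) 0); [discriminate|lra].
  - apply IHn; auto. lia.
Qed.

Lemma sumR_lt n f g : (forall j, (j < n)%nat -> f j <= g j) ->
  (exists j, (j < n)%nat /\ f j < g j) -> sumR n f < sumR n g.
Proof.
  induction n; simpl; intros H [j [Hj Hlt]]; [lia|].
  destruct (Nat.eq_dec j n) as [->|Hne].
  - assert (sumR n f <= sumR n g) by (apply sumR_le; intros; apply H; lia). lra.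
  - assert (sumR n f < sumR n g) by (apply IHn; [intros; apply H; lia| exists j; split; [lia|auto]]).
    assert (f n <= g n) by (apply H; lia). lra.
Qed.

Lemma prodR_pos n F : (forall j, (j < n)%nat -> 0 < F j) -> 0 < prodR n F.
Proof. induction n; simpl; intros H; [lra|]. apply Rmult_lt_0_compat; [apply IHn; intros; apply H; lia|apply H; lia]. Qed.

Lemma ln_prodR n F : (forall j, (j < n)%nat -> 0 < F j) -> ln (prodR n F) = sumR n (fun j => ln (F j)).
Proof.
  induction n; simpl; intros H; [apply ln_1|].
  rewrite ln_mult; [rewrite IHn; [reflexivity|intros; apply H; lia]| |apply H; lia].
  apply prodR_pos; intros; apply H; lia.
Qed.

Definition wT (a : nat -> R) (rho : R) (p : nat -> R) (j : nat) : R :=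
  if Rlt_dec 0 (a j) then Rpower (a j) (/ (1 - rho)) * Rpower (p j) (theta rho) else 0.

Lemma wT_nonneg a rho p j : 0 <= wT a rho p j.
Proof. unfold wT. destruct (Rlt_dec 0 (a j)); [|lra]. left; apply Rmult_lt_0_compat; apply Rpower_pos. Qed.

Lemma wT_pos a rho p j : 0 < a j -> 0 < wT a rho p j.
Proof. intros. unfold wT. destruct (Rlt_dec 0 (a j)); [|lra]. apply Rmult_lt_0_compat; apply Rpower_pos. Qed.

Lemma wT_zero a rho p j : ~ 0 < a j -> wT a rho p j = 0.
Proof. intros. unfold wT. destruct (Rlt_dec 0 (a j)); [contradiction|reflexivity]. Qed.

Lemma sumR_wT_pos n a rho p : (exists j, (j < n)%nat /\ 0 < a j) -> 0 < sumR n (wT a rho p).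
Proof.
  intros Hex. rewrite <- (sumR_zero n). apply sumR_lt.
  - intros; apply wT_nonneg.
  - destruct Hex as [j [Hj Ha]]. exists j. split; auto. apply wT_pos; auto.
Qed.

Lemma ln_div x y : 0 < x -> 0 < y -> ln (y / x) = ln y - ln x.
Proof. intros. unfold Rdiv. rewrite ln_mult, ln_Rinv; [ring|lra|lra|apply Rinv_0_lt_compat; lra]. Qed.

Lemma pow_tangent rho x y : rho < 0 -> 0 < x -> 0 < y ->
  Rpower x rho + rho * Rpower x (rho - 1) * (y - x) <= Rpower y rho /\
  (y <> x -> Rpower x rho + rho * Rpower x (rho - 1) * (y - x) < Rpower y rho).
Proof.
  intros Hr Hx Hy.
  assert (E : Rpower y rho = Rpower x rho * exp (rho * ln (y / x))).
  { unfold Rpower. rewrite <- exp_plus. f_equal. rewrite ln_div by lra. ring. }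
  assert (E2 : rho * Rpower x (rho - 1) * (y - x) = Rpower x rho * (rho * (y / x - 1))).
  { unfold Rpower. replace ((rho - 1) * ln x) with (rho * ln x + - ln x) by ring.
    rewrite exp_plus, exp_Ropp, exp_ln by lra. field. lra. }
  rewrite E, E2.
  pose proof (Rpower_pos x rho) as Hp.
  assert (Hyx : 0 < y / x) by (apply Rdiv_lt_0_compat; lra).
  pose proof (ln_le_xm1 (y / x) Hyx) as Hl.
  pose proof (exp_ineq1_le (rho * ln (y / x))).
  split.
  - assert (rho * (y / x - 1) <= rho * ln (y / x)) by (apply Rmult_le_compat_neg_l; lra).
    apply Rmult_le_compat_l with (r := Rpower x rho) in H0; [|lra]. 
    assert (Rpower x rho * (1 + rho * ln (y / x)) <= Rpower x rho * exp (rho * ln (y / x))) by (apply Rmult_le_compat_l; lra).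
    nra.
  - intros Hne.
    assert (Hne2 : ln (y / x) <> 0).
    { intro H0. assert (y / x = 1). { rewrite <- (exp_ln (y/x)) by lra. rewrite H0. apply exp_0. }
      apply Hne. replace y with (y / x * x) by (field; lra). rewrite H1. ring. }
    assert (Hst : ln (y / x) < y / x - 1).
    { pose proof (exp_ineq1 _ Hne2). rewrite exp_ln in H0 by lra. lra. }
    assert (rho * (y / x - 1) < rho * ln (y / x)) by (apply Rmult_lt_gt_compat_neg_l; lra).
    assert (Rpower x rho * (1 + rho * ln (y / x)) <= Rpower x rho * exp (rho * ln (y / x))) by (apply Rmult_le_compat_l; lra).
    assert (Rpower x rho * (rho * (y / x - 1)) < Rpower x rho * (rho * ln (y / x))) by (apply Rmult_lt_compat_l; lra).
    nra.
Qed.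

Lemma ln_tangent x y : 0 < x -> 0 < y ->
  ln y <= ln x + (y - x) / x /\ (y <> x -> ln y < ln x + (y - x) / x).
Proof.
  intros Hx Hy.
  assert (Hyx : 0 < y / x) by (apply Rdiv_lt_0_compat; lra).
  assert (E : ln y = ln x + ln (y / x)) by (rewrite ln_div by lra; ring).
  assert (E2 : (y - x) / x = y / x - 1) by (field; lra).
  rewrite E, E2. pose proof (ln_le_xm1 _ Hyx). split; [lra|].
  intros Hne.
  assert (Hne2 : ln (y / x) <> 0).
  { intro H0. assert (y / x = 1). { rewrite <- (exp_ln (y/x)) by lra. rewrite H0. apply exp_0. }
    apply Hne. replace y with (y / x * x) by (field; lra). rewrite H1. ring. }
  pose proof (exp_ineq1 _ Hne2) as Hq. rewrite exp_ln in Hq by lra. lra.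
Qed.


Lemma Delta_facts n (a p xh y : nat -> R) e :
  (forall j, (j < n)%nat -> 0 < p j) ->
  (forall j, (j < n)%nat -> ~ 0 < a j -> xh j = 0) ->
  sumR n (fun j => p j * xh j) = e ->
  (forall j, (j < n)%nat -> 0 <= y j) ->
  sumR n (fun j => p j * y j) <= e ->
  sumR n (fun j => if Rlt_dec 0 (a j) then p j * (y j - xh j) else 0) <= 0 /\
  ((exists j, (j < n)%nat /\ ~ 0 < a j /\ y j <> xh j) ->
   sumR n (fun j => if Rlt_dec 0 (a j) then p j * (y j - xh j) else 0) < 0).
Proof.
  intros Hp Hx Hs Hy Hb.
  assert (E : sumR n (fun j => if Rlt_dec 0 (a j) then p j * (y j - xh j) else 0) =
     sumR n (fun j => p j * y j) - sumR n (fun j => p j * xh j) -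
     sumR n (fun j => if Rlt_dec 0 (a j) then 0 else p j * y j)).
  { rewrite <- !sumR_minus. apply sumR_ext. intros j Hj.
    destruct (Rlt_dec 0 (a j)) as [Ha|Ha]; [ring|]. rewrite (Hx j Hj Ha). ring. }
  assert (B0 : 0 <= sumR n (fun j => if Rlt_dec 0 (a j) then 0 else p j * y j)).
  { apply sumR_nonneg. intros j Hj. destruct (Rlt_dec 0 (a j)); simpl; [lra|].
    apply Rmult_le_pos; [left; apply Hp|apply Hy]; auto. }
  rewrite E. split; [lra|].
  intros [j [Hj [Ha Hne]]].
  assert (B1 : 0 < sumR n (fun j => if Rlt_dec 0 (a j) then 0 else p j * y j)).
  { assert (Z : sumR n (fun _ => 0) < sumR n (fun j => if Rlt_dec 0 (a j) then 0 else p j * y j)).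
    2:{ rewrite sumR_zero in Z. exact Z. }
    apply sumR_lt.
    - intros k Hk. destruct (Rlt_dec 0 (a k)); simpl; [lra|].
      apply Rmult_le_pos; [left; apply Hp|apply Hy]; auto.
    - exists j. split; auto. destruct (Rlt_dec 0 (a j)); simpl; [contradiction|].
      rewrite (Hx j Hj Ha) in Hne. specialize (Hy j Hj). specialize (Hp j Hj).
      apply Rmult_lt_0_compat; lra. }
  lra.
Qed.

Lemma exp_ident A C X Y : 0 < A -> 0 < C -> ln A + X = ln C + Y -> A * exp X = exp Y * C.
Proof.
  intros HA HC H. rewrite <- (exp_ln A) at 1 by lra. rewrite <- (exp_ln C) at 1 by lra.
  rewrite <- !exp_plus. f_equal. lra.
Qed.

Lemma ln_le u v : 0 < u -> u <= v -> ln u <= ln v.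
Proof. intros. destruct (Req_dec u v) as [->|]; [lra|]. left; apply ln_increasing; lra. Qed.

Lemma xh_ln a rho p e S j : rho <= 0 -> 0 < a j -> 0 < p j -> 0 < e -> 0 < S ->
  ln (e * wT a rho p j / (S * p j)) = ln e - ln S + / (1 - rho) * ln (a j) - / (1 - rho) * ln (p j).
Proof.
  intros Hr Ha Hp He HS. unfold wT. destruct (Rlt_dec 0 (a j)) as [_|]; [|lra].
  pose proof (Rpower_pos (a j) (/ (1 - rho))). pose proof (Rpower_pos (p j) (theta rho)).
  unfold Rdiv. rewrite ln_mult, ln_mult, ln_Rinv, ln_mult, ln_mult, !ln_Rpower; try lra.
  - unfold theta. field. lra.
  - apply Rmult_lt_0_compat; lra.
  - apply Rmult_lt_0_compat; lra.
  - apply Rmult_lt_0_compat; [lra|]. apply Rmult_lt_0_compat; lra.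
  - apply Rinv_0_lt_compat. apply Rmult_lt_0_compat; lra.
Qed.

Lemma demand_form n a rho e p x :
  rho <= 0 -> 0 < e -> (forall j, (j < n)%nat -> 0 <= a j) ->
  (exists j, (j < n)%nat /\ 0 < a j) -> (forall j, (j < n)%nat -> 0 < p j) ->
  optimal_bundle n a rho e p x ->
  forall j, (j < n)%nat -> p j * x j = e * wT a rho p j / sumR n (wT a rho p).
Proof.
  intros Hr He Ha Hex Hp [Hx0 [Hxb Hxopt]].
  set (T := wT a rho p). set (S := sumR n T).
  assert (HS : 0 < S) by (apply sumR_wT_pos; auto).
  set (xh := fun j => e * T j / (S * p j)).
  assert (Hxh0 : forall j, (j < n)%nat -> 0 <= xh j).
  { intros j Hj. unfold xh. pose proof (wT_nonneg a rho p j). specialize (Hp j Hj).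
    apply Rdiv_nonneg; [apply Rmult_le_pos; [lra|exact H]|apply Rmult_lt_0_compat; lra]. }
  assert (Hxhp : forall j, (j < n)%nat -> 0 < a j -> 0 < xh j).
  { intros j Hj Haj. unfold xh. pose proof (wT_pos a rho p j Haj). specialize (Hp j Hj).
    apply Rdiv_lt_0_compat; [apply Rmult_lt_0_compat; [lra|exact H]|apply Rmult_lt_0_compat; lra]. }
  assert (Hxhz : forall j, (j < n)%nat -> ~ 0 < a j -> xh j = 0).
  { intros j Hj Haj. unfold xh, T. rewrite wT_zero by auto. unfold Rdiv. ring. }
  assert (Hxhs : sumR n (fun j => p j * xh j) = e).
  { unfold xh. transitivity (sumR n (fun j => (e / S) * T j)).
    - apply sumR_ext. intros j Hj. specialize (Hp j Hj). field. lra.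
    - rewrite sumR_scal. fold S. field. lra. }
  assert (Huniq : forall y, (forall j, (j < n)%nat -> 0 <= y j) -> sumR n (fun j => p j * y j) <= e ->
            ces_utility n a rho xh <= ces_utility n a rho y -> forall j, (j < n)%nat -> y j = xh j).
  { intros y Hy0 Hyb Hu j1 Hj1.
    destruct (Req_dec (y j1) (xh j1)) as [|Hne]; [auto|exfalso].
    destruct (Delta_facts n a p xh y e Hp Hxhz Hxhs Hy0 Hyb) as [HD1 HD2].
    set (Dt := fun j => if Rlt_dec 0 (a j) then p j * (y j - xh j) else 0) in *.
    unfold ces_utility in Hu. rewrite (hasZero_false n a xh) in Hu by exact Hxhp.
    destruct (hasZero n a y) eqn:Hz.
    - destruct (Req_EM_T rho 0).
      + assert (0 < prodR n (fun j => if Rlt_dec 0 (a j) then Rpower (xh j) (a j / sumR n a) else 1)).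
        { apply prodR_pos. intros j Hj. destruct (Rlt_dec 0 (a j)); [apply Rpower_pos|lra]. }
        lra.
      + pose proof (Rpower_pos (sumR n (fun j => if Rlt_dec 0 (a j) then a j * Rpower (xh j) rho else 0)) (/ rho)). lra.
    - pose proof (hasZero_false_inv n a y Hz) as Hyp.
      destruct (Req_EM_T rho 0) as [Hr0|Hr0].
      +
        subst rho.
        set (A := sumR n a) in *.
        assert (HTa : forall j, (j < n)%nat -> 0 < a j -> T j = a j).
        { intros j Hj Haj. unfold T, wT. destruct (Rlt_dec 0 (a j)); [|lra].
          unfold theta. replace (/ (1 - 0)) with 1 by field. replace (0 / (0 - 1)) with 0 by field.
          rewrite Rpower_1, Rpower_O by (try (apply Hp; exact Hj); lra). ring. }
        assert (HSA : S = A).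
        { unfold S, A. apply sumR_ext. intros j Hj. destruct (Rlt_dec 0 (a j)) as [Haj|Haj].
          - apply HTa; auto.
          - unfold T. rewrite wT_zero by auto. specialize (Ha j Hj). lra. }
        set (Fy := fun j => if Rlt_dec 0 (a j) then Rpower (y j) (a j / A) else 1).
        set (Fx := fun j => if Rlt_dec 0 (a j) then Rpower (xh j) (a j / A) else 1).
        assert (Hu' : prodR n Fx <= prodR n Fy) by exact Hu.
        assert (HFx : forall j, (j < n)%nat -> 0 < Fx j).
        { intros j Hj. unfold Fx. destruct (Rlt_dec 0 (a j)); [apply Rpower_pos|lra]. }
        assert (HFy : forall j, (j < n)%nat -> 0 < Fy j).
        { intros j Hj. unfold Fy. destruct (Rlt_dec 0 (a j)); [apply Rpower_pos|lra]. }
        assert (Hl : sumR n (fun j => ln (Fx j)) <= sumR n (fun j => ln (Fy j))).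
        { rewrite <- !ln_prodR by auto. apply ln_le; [apply prodR_pos; auto|exact Hu']. }
        assert (Hterm : forall j, (j < n)%nat -> ln (Fy j) <= ln (Fx j) + / e * Dt j /\
                   (y j <> xh j -> 0 < a j -> ln (Fy j) < ln (Fx j) + / e * Dt j)).
        { intros j Hj. unfold Fy, Fx, Dt. destruct (Rlt_dec 0 (a j)) as [Haj|Haj].
          - rewrite !ln_Rpower.
            assert (HA : 0 < A) by (rewrite <- HSA; exact HS).
            assert (Hxj := Hxhp j Hj Haj). assert (Hyj := Hyp j Hj Haj).
            destruct (ln_tangent (xh j) (y j) Hxj Hyj) as [T1 T2].
            assert (Heq : a j / A * ((y j - xh j) / xh j) = / e * (p j * (y j - xh j))).
            { unfold xh. rewrite HTa, HSA by auto. specialize (Hp j Hj). field. repeat split; lra. }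
            assert (Hc : 0 < a j / A) by (apply Rdiv_lt_0_compat; lra).
            split.
            + assert (a j / A * ln (y j) <= a j / A * (ln (xh j) + (y j - xh j) / xh j)) by (apply Rmult_le_compat_l; lra).
              lra.
            + intros Hne' _.
              assert (a j / A * ln (y j) < a j / A * (ln (xh j) + (y j - xh j) / xh j)) by (apply Rmult_lt_compat_l; auto).
              lra.
          - rewrite ln_1. split; [lra|]. intros _ H; contradiction. }
        assert (Hsum : sumR n (fun j => ln (Fx j) + / e * Dt j) = sumR n (fun j => ln (Fx j)) + / e * sumR n Dt).
        { rewrite sumR_plus, sumR_scal. reflexivity. }
        assert (He' : 0 < / e) by (apply Rinv_0_lt_compat; lra).
        assert (Hstrict : sumR n (fun j => ln (Fy j)) < sumR n (fun j => ln (Fx j))).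
        { destruct (Rlt_dec 0 (a j1)) as [Haj1|Haj1].
          - assert (sumR n (fun j => ln (Fy j)) < sumR n (fun j => ln (Fx j) + / e * Dt j)).
            { apply sumR_lt. intros j Hj; apply Hterm; auto.
              exists j1. split; auto. apply Hterm; auto. }
            assert (/ e * sumR n Dt <= 0) by (apply Rmult_le_0_l_0; lra) || nra.
            lra.
          - assert (sumR n Dt < 0) by (apply HD2; exists j1; auto).
            assert (sumR n (fun j => ln (Fy j)) <= sumR n (fun j => ln (Fx j) + / e * Dt j)).
            { apply sumR_le. intros j Hj; apply Hterm; auto. }
            assert (/ e * sumR n Dt < 0) by nra.
            lra. }
        lra.
      +
        assert (Hrn : rho < 0) by lra.
        set (Sy := sumR n (fun j => if Rlt_dec 0 (a j) then a j * Rpower (y j) rho else 0)).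
        set (Sx := sumR n (fun j => if Rlt_dec 0 (a j) then a j * Rpower (xh j) rho else 0)).
        assert (Hu' : Rpower Sx (/ rho) <= Rpower Sy (/ rho)) by exact Hu.
        destruct Hex as [j0 [Hj0 Haj0]].
        assert (HSx : 0 < Sx).
        { assert (Z : sumR n (fun _ => 0) < Sx).
          2:{ rewrite sumR_zero in Z. exact Z. }
          apply sumR_lt.
          - intros j Hj. destruct (Rlt_dec 0 (a j)); [|lra]. pose proof (Rpower_pos (xh j) rho). nra.
          - exists j0. split; auto. destruct (Rlt_dec 0 (a j0)); [|lra]. pose proof (Rpower_pos (xh j0) rho). nra. }
        assert (HSy : 0 < Sy).
        { assert (Z : sumR n (fun _ => 0) < Sy).
          2:{ rewrite sumR_zero in Z. exact Z. }
          apply sumR_lt.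
          - intros j Hj. destruct (Rlt_dec 0 (a j)); [|lra]. pose proof (Rpower_pos (y j) rho). nra.
          - exists j0. split; auto. destruct (Rlt_dec 0 (a j0)); [|lra]. pose proof (Rpower_pos (y j0) rho). nra. }
        assert (Hle : Sy <= Sx).
        { destruct (Rle_dec Sy Sx) as [|Hlt]; [auto|exfalso].
          assert (ln Sx < ln Sy) by (apply ln_increasing; lra).
          assert (Hir : / rho < 0) by (apply Rinv_lt_0_compat; lra).
          assert (/ rho * ln Sy < / rho * ln Sx) by (apply Rmult_lt_gt_compat_neg_l; lra).
          unfold Rpower in Hu'. assert (exp (/ rho * ln Sy) < exp (/ rho * ln Sx)) by (apply exp_increasing; lra).
          lra. }
        set (lam := exp ((rho - 1) * (ln e - ln S))).
        assert (Hlam : 0 < lam) by apply exp_pos.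
        assert (Hid : forall j, (j < n)%nat -> 0 < a j -> a j * Rpower (xh j) (rho - 1) = lam * p j).
        { intros j Hj Haj. unfold Rpower, lam.
          unfold xh, T. rewrite xh_ln by (try (apply Hp; exact Hj); auto; lra).
          apply exp_ident; [auto|apply Hp; auto|].
          field_simplify; [|lra]. field. lra. }
        assert (Hterm : forall j, (j < n)%nat ->
          (if Rlt_dec 0 (a j) then a j * Rpower (xh j) rho else 0) + rho * lam * Dt j <=
          (if Rlt_dec 0 (a j) then a j * Rpower (y j) rho else 0) /\
          (y j <> xh j -> 0 < a j ->
          (if Rlt_dec 0 (a j) then a j * Rpower (xh j) rho else 0) + rho * lam * Dt j <
          (if Rlt_dec 0 (a j) then a j * Rpower (y j) rho else 0))).
        { intros j Hj. unfold Dt. destruct (Rlt_dec 0 (a j)) as [Haj|Haj].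
          - destruct (pow_tangent rho (xh j) (y j) Hrn (Hxhp j Hj Haj) (Hyp j Hj Haj)) as [T1 T2].
            assert (E : a j * (Rpower (xh j) rho + rho * Rpower (xh j) (rho - 1) * (y j - xh j)) =
                        a j * Rpower (xh j) rho + rho * lam * (p j * (y j - xh j))).
            { transitivity (a j * Rpower (xh j) rho + rho * (a j * Rpower (xh j) (rho - 1)) * (y j - xh j)); [ring|].
              rewrite (Hid j Hj Haj). ring. }
            split.
            + rewrite <- E. apply Rmult_le_compat_l; lra.
            + intros Hne' _. rewrite <- E. apply Rmult_lt_compat_l; auto.
          - split; [lra|]. intros _ H; contradiction. }
        assert (Hsum : sumR n (fun j => (if Rlt_dec 0 (a j) then a j * Rpower (xh j) rho else 0) + rho * lam * Dt j) = Sx + rho * lam * sumR n Dt).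
        { rewrite sumR_plus, sumR_scal. reflexivity. }
        assert (Hstrict : Sx < Sy).
        { destruct (Rlt_dec 0 (a j1)) as [Haj1|Haj1].
          - assert (sumR n (fun j => (if Rlt_dec 0 (a j) then a j * Rpower (xh j) rho else 0) + rho * lam * Dt j) < Sy).
            { apply sumR_lt. intros j Hj; apply Hterm; auto.
              exists j1. split; auto. apply Hterm; auto. }
            assert (0 <= rho * lam * sumR n Dt).
            { assert (rho * lam < 0) by nra. nra. }
            lra.
          - assert (sumR n Dt < 0) by (apply HD2; exists j1; auto).
            assert (sumR n (fun j => (if Rlt_dec 0 (a j) then a j * Rpower (xh j) rho else 0) + rho * lam * Dt j) <= Sy).
            { apply sumR_le. intros j Hj; apply Hterm; auto. }
            assert (0 < rho * lam * sumR n Dt).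
            { assert (rho * lam < 0) by nra. nra. }
            lra. }
        lra. }
  intros j Hj.
  assert (Hxh_b : sumR n (fun j => p j * xh j) <= e) by lra.
  pose proof (Huniq x Hx0 Hxb (Hxopt xh Hxh0 Hxh_b) j Hj) as Hxj.
  rewrite Hxj. unfold xh. specialize (Hp j Hj). field. split; lra.
Qed.


Lemma theta_range rho : rho <= 0 -> 0 <= theta rho < 1.
Proof.
  intros H. unfold theta. split.
  - replace (rho / (rho - 1)) with ((- rho) / (1 - rho)) by (field; lra).
    apply Rdiv_nonneg; lra.
  - apply Rmult_lt_reg_r with (1 - rho); [lra|].
    replace (rho / (rho - 1) * (1 - rho)) with (- rho) by (field; lra). lra.
Qed.

Lemma wT_scale a rho s q j : 0 < s j -> 0 < q j ->
  wT a rho q j = wT a rho s j * Rpower (q j / s j) (theta rho).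
Proof.
  intros Hs Hq. unfold wT. destruct (Rlt_dec 0 (a j)); [|ring].
  rewrite Rmult_assoc, Rpower_mult_distr by (try apply Rdiv_lt_0_compat; lra).
  f_equal. f_equal. field. lra.
Qed.

Theorem mainTheorem9
  (n m : nat) (a : nat -> nat -> R) (rho e : nat -> R)
  (pstar : nat -> R) (thbar : R) (p' : nat -> R) (x' : nat -> nat -> R) :
  (forall i, (i < m)%nat -> rho i <= 0) ->
  (forall i, (i < m)%nat -> 0 < e i) ->
  (forall i j, (i < m)%nat -> (j < n)%nat -> 0 <= a i j) ->
  (forall i, (i < m)%nat -> exists j, (j < n)%nat /\ 0 < a i j) ->
  market_equilibrium n m a rho e pstar ->
  (forall j, (j < n)%nat -> 0 < pstar j) ->
  (forall i, (i < m)%nat -> theta (rho i) <= thbar) ->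
  (exists i, (i < m)%nat /\ theta (rho i) = thbar) ->
  (forall j, (j < n)%nat -> pstar j / (19 / 10) <= p' j <= (19 / 10) * pstar j) ->
  is_demand n m a rho e p' x' ->
  sumR n (fun j => pstar j * (ln (p' j / pstar j)) ^ 2)
    <= Mbar thbar * sumR n (fun j => p' j * (excess m x' j) ^ 2).
Proof.
  intros Hrho He Ha Hex [xs [Hdems [Hz0 _]]] Hps Hthle [i0 [Hi0 Hth0]] Hbox Hdem.
  assert (Hthb : 0 <= thbar < 1) by (rewrite <- Hth0; apply theta_range; auto).
  assert (Hq : forall j, (j < n)%nat -> 0 < p' j).
  { intros j Hj. specialize (Hbox j Hj). specialize (Hps j Hj).
    assert (0 < pstar j / (19/10)) by (apply Rdiv_lt_0_compat; lra). lra. }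
  set (r := fun j => p' j / pstar j).
  assert (Hr : forall j, (j < n)%nat -> / 2 <= r j <= 2).
  { intros j Hj. specialize (Hbox j Hj). specialize (Hps j Hj). unfold r. split.
    - apply Rmult_le_reg_r with (pstar j); [lra|]. unfold Rdiv. rewrite Rmult_assoc, Rinv_l by lra.
      unfold Rdiv in Hbox. lra.
    - apply Rmult_le_reg_r with (pstar j); [lra|]. unfold Rdiv. rewrite Rmult_assoc, Rinv_l by lra. lra. }
  assert (Hrpos : forall j, (j < n)%nat -> 0 < r j) by (intros j Hj; specialize (Hr j Hj); lra).
  set (Sw := fun i => sumR n (wT (a i) (rho i) pstar)).
  assert (HSw : forall i, (i < m)%nat -> 0 < Sw i) by (intros i Hi; apply sumR_wT_pos; auto).
  set (U := fun i j => wT (a i) (rho i) pstar j / Sw i).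
  set (Rr := fun i j => Rpower (r j) (theta (rho i))).
  set (P := fun i => sumR n (fun j => U i j * Rr i j)).
  set (D := fun i => sumR n (fun j => U i j * r j) - 2 + sumR n (fun j => U i j * Rr i j / r j) / P i).
  set (W := fun i => sumR n (fun j => U i j * ((r j - 1) ^ 2 / r j))).
  assert (HU0 : forall i j, (i < m)%nat -> 0 <= U i j).
  { intros i j Hi. unfold U. apply Rdiv_nonneg; [apply wT_nonneg|auto]. }
  assert (HU1 : forall i, (i < m)%nat -> sumR n (U i) = 1).
  { intros i Hi. unfold U. transitivity (sumR n (fun j => / Sw i * wT (a i) (rho i) pstar j)).
    - apply sumR_ext; intros; unfold Rdiv; ring.
    - rewrite sumR_scal. fold (Sw i). field. specialize (HSw i Hi). lra. }
  assert (HP : forall i, (i < m)%nat -> 0 < P i).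
  { intros i Hi. destruct (Hex i Hi) as [j0 [Hj0 Ha0]].
    assert (Z : sumR n (fun _ => 0) < P i).
    2:{ rewrite sumR_zero in Z. exact Z. }
    apply sumR_lt.
    - intros j Hj. apply Rmult_le_pos; [apply HU0; auto|left; apply Rpower_pos].
    - exists j0. split; auto. apply Rmult_lt_0_compat; [|apply Rpower_pos].
      unfold U. apply Rdiv_lt_0_compat; [apply wT_pos; auto|auto]. }
  assert (Hxs : forall i j, (i < m)%nat -> (j < n)%nat -> pstar j * xs i j = e i * U i j).
  { intros i j Hi Hj. rewrite (demand_form n (a i) (rho i) (e i) pstar (xs i)) by (auto; intros; apply Ha; auto).
    unfold U, Sw. unfold Rdiv. ring. }
  assert (Hxq : forall i j, (i < m)%nat -> (j < n)%nat -> p' j * x' i j = e i * U i j * Rr i j / P i).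
  { intros i j Hi Hj. rewrite (demand_form n (a i) (rho i) (e i) p' (x' i)) by (auto; intros; apply Ha; auto).
    assert (E1 : sumR n (wT (a i) (rho i) p') = Sw i * P i).
      { unfold P. rewrite <- sumR_scal. apply sumR_ext. intros k Hk.
        rewrite (wT_scale (a i) (rho i) pstar p' k) by auto. unfold U, Rr, r.
        field. specialize (HSw i Hi). lra. }
      rewrite E1, (wT_scale (a i) (rho i) pstar p' j) by auto.
      unfold U, Rr, r. field. specialize (HSw i Hi). specialize (HP i Hi). split; lra. }
  assert (Hsum1 : forall j, (j < n)%nat -> sumR m (fun i => xs i j) = 1).
  { intros j Hj. specialize (Hz0 j Hj (Hps j Hj)). unfold excess in Hz0. lra. }
  assert (Hs_dec : forall j, (j < n)%nat -> pstar j = sumR m (fun i => e i * U i j)).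
  { intros j Hj. rewrite <- (Rmult_1_r (pstar j)), <- (Hsum1 j Hj), <- sumR_scal.
    apply sumR_ext. intros i Hi. apply Hxs; auto. }
  set (K := fun i j => e i * (U i j * r j - U i j - U i j * Rr i j / P i + U i j * Rr i j / r j / P i)).
  assert (Hperj : forall j, (j < n)%nat ->
     (- excess m x' j) * (p' j - pstar j) = sumR m (fun i => K i j)).
  { intros j Hj. unfold excess.
    assert (E1 : p' j * sumR m (fun i => x' i j) = sumR m (fun i => e i * U i j * Rr i j / P i)).
    { rewrite <- sumR_scal. apply sumR_ext. intros i Hi. apply Hxq; auto. }
    assert (E2 : pstar j * sumR m (fun i => x' i j) = sumR m (fun i => e i * U i j * Rr i j / r j / P i)).
    { rewrite <- sumR_scal. apply sumR_ext. intros i Hi.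
      replace (pstar j * x' i j) with (p' j * x' i j / r j).
      2:{ unfold r. specialize (Hps j Hj). specialize (Hq j Hj). field. lra. }
      rewrite Hxq by auto. field. specialize (HP i Hi). specialize (Hrpos j Hj). lra. }
    assert (E3 : p' j = sumR m (fun i => e i * U i j * r j)).
    { replace (p' j) with (pstar j * r j) by (unfold r; specialize (Hps j Hj); field; lra).
      rewrite (Hs_dec j Hj), Rmult_comm, <- sumR_scal. apply sumR_ext. intros; ring. }
    assert (E4 := Hs_dec j Hj).
    transitivity (p' j - pstar j - p' j * sumR m (fun i => x' i j) + pstar j * sumR m (fun i => x' i j)); [ring|].
    rewrite E1, E2. rewrite E3 at 1. rewrite E4 at 1.
    rewrite <- !sumR_minus, <- sumR_plus. apply sumR_ext. intros i Hi. unfold K. lra. }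
  assert (Hperi : forall i, (i < m)%nat -> sumR n (fun j => K i j) = e i * D i).
  { intros i Hi. unfold K, D.
    rewrite sumR_scal. f_equal.
    rewrite !sumR_plus, !sumR_minus.
    rewrite (HU1 i Hi).
    assert (E1 : sumR n (fun j => U i j * Rr i j / P i) = 1).
    { transitivity (sumR n (fun j => / P i * (U i j * Rr i j))); [apply sumR_ext; intros; unfold Rdiv; ring|].
      rewrite sumR_scal. fold (P i). field. specialize (HP i Hi). lra. }
    assert (E2 : sumR n (fun j => U i j * Rr i j / r j / P i) = sumR n (fun j => U i j * Rr i j / r j) / P i).
    { transitivity (sumR n (fun j => / P i * (U i j * Rr i j / r j))); [apply sumR_ext; intros; unfold Rdiv; ring|].
      rewrite sumR_scal. unfold Rdiv. ring. }
    rewrite E1, E2. ring. }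
  set (B := sumR n (fun j => pstar j * ((r j - 1) ^ 2 / r j))).
  assert (HB : B = sumR m (fun i => e i * W i)).
  { unfold B, W. transitivity (sumR n (fun j => sumR m (fun i => e i * (U i j * ((r j - 1) ^ 2 / r j))))).
    - apply sumR_ext. intros j Hj. rewrite (Hs_dec j Hj), Rmult_comm, <- sumR_scal. apply sumR_ext. intros; ring.
    - rewrite sumR_swap. apply sumR_ext. intros i Hi. rewrite sumR_scal. reflexivity. }
  set (Y := sumR n (fun j => (- excess m x' j) * (p' j - pstar j))).
  assert (HY : Y = sumR m (fun i => e i * D i)).
  { unfold Y. transitivity (sumR n (fun j => sumR m (fun i => K i j))).
    - apply sumR_ext. intros; apply Hperj; auto.
    - rewrite sumR_swap. apply sumR_ext. intros; apply Hperi; auto. }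
  assert (HYB : gam * (1 - thbar) * B <= Y).
  { rewrite HY, HB, <- sumR_scal. apply sumR_le. intros i Hi.
    pose proof (buyer_ineq n (U i) r (theta (rho i)) (theta_range (rho i) (Hrho i Hi))
                   (fun j _ => HU0 i j Hi) (HU1 i Hi) Hr) as Hbi.
    fold (Rr i) in Hbi.
    assert (HW0 : 0 <= W i).
    { apply sumR_nonneg. intros j Hj. apply Rmult_le_pos; [apply HU0; auto|].
      apply Rdiv_nonneg; [apply pow2_ge_0|apply Hrpos; auto]. }
    assert (Hth := Hthle i Hi). specialize (He i Hi).
    assert (gam * (1 - thbar) * W i <= gam * (1 - theta (rho i)) * W i).
    { apply Rmult_le_compat_r; [auto|]. unfold gam. lra. }
    change (gam * (1 - theta (rho i)) * W i <= D i) in Hbi.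
    assert (gam * (1 - thbar) * W i <= D i) by lra.
    replace (gam * (1 - thbar) * (e i * W i)) with (e i * (gam * (1 - thbar) * W i)) by ring.
    apply Rmult_le_compat_l; lra. }
  set (Z := sumR n (fun j => p' j * (excess m x' j) ^ 2)).
  assert (HCS : Y ^ 2 <= Z * B).
  { unfold Y, Z.
    replace B with (sumR n (fun j => (p' j - pstar j) ^ 2 / p' j)).
    2:{ unfold B. apply sumR_ext. intros j Hj. unfold r. specialize (Hps j Hj). specialize (Hq j Hj).
        field. lra. }
    replace (sumR n (fun j => p' j * excess m x' j ^ 2)) with (sumR n (fun j => p' j * (- excess m x' j) ^ 2))
      by (apply sumR_ext; intros; ring).
    apply sumR_CS. auto. }
  assert (HZ : 0 <= Z).
  { apply sumR_nonneg. intros j Hj. apply Rmult_le_pos; [left; apply Hq; auto|apply pow2_ge_0]. }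
  assert (HB0 : 0 <= B).
  { apply sumR_nonneg. intros j Hj. apply Rmult_le_pos; [left; apply Hps; auto|].
    apply Rdiv_nonneg; [apply pow2_ge_0|apply Hrpos; auto]. }
  assert (HL : sumR n (fun j => pstar j * (ln (p' j / pstar j)) ^ 2) <= B).
  { apply sumR_le. intros j Hj. apply Rmult_le_compat_l; [left; apply Hps; auto|].
    fold (r j). pose proof (ln_sq_le (r j) (Hrpos j Hj)).
    replace ((r j - 1) ^ 2 / r j) with (r j + / r j - 2) by (field; specialize (Hrpos j Hj); lra). lra. }
  pose proof (Mbar_bound thbar Hthb) as HM.
  set (c := gam * (1 - thbar)) in *.
  assert (Hc : 0 < c) by (unfold c, gam; nra).
  assert (HcB : c ^ 2 * B <= Z).
  { destruct (Req_dec B 0) as [H0|H0].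
    - rewrite H0. lra.
    - assert (c * B <= Y) by lra.
      assert ((c * B) ^ 2 <= Y ^ 2).
      { assert (0 <= c * B) by nra. nra. }
      assert (c ^ 2 * B * B <= Z * B) by nra.
      apply Rmult_le_reg_r with B; [lra|]. lra. }
  assert (HM' : 1 <= Mbar thbar * c ^ 2) by (unfold c; replace ((gam * (1 - thbar)) ^ 2) with (gam ^ 2 * (1 - thbar) ^ 2) by ring; exact HM).
  assert (HMpos : 0 < Mbar thbar) by nra.
  assert (B <= Mbar thbar * Z).
  { assert (Mbar thbar * (c ^ 2 * B) <= Mbar thbar * Z) by (apply Rmult_le_compat_l; lra).
    assert (B <= Mbar thbar * c ^ 2 * B) by nra. lra. }
  lra.
Qed.
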